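(* For every $n\in\mathbb{N}$, the directed arrowhead $\vec{\mathcal{AT}}_n$ has oriented diameter $\vec{D}_n=\sqrt{N}-1=2^n-1$, where $N=4^n$. Moreover, the number of vertices at directed distance $\vec{D}_n$ from $(0,0)$ is $3$ when $n=1$ and $6$ when $n>1$.
   Context: For $n\in\mathbb{N}$ let $G_n=\mathbb{Z}_{2^n}\times\mathbb{Z}_{2^n}$ (additive group), $N=|G_n|=4^n$. Let $S^+=\{(-1,-1),(1,0),(0,1)\}$. The directed arrowhead $\vec{\mathcal{AT}}_n$ is the Cayley digraph $\Gamma(G_n,S^+)$: vertex set $G_n$, with an arc $u\to u+s$ for each $u\in G_n$ and $s\in S^+$ (arithmetic modulo $2^n$). The oriented diameter is the maximum, over ordered pairs $(u,v)$ of vertices, of the length of a shortest directed path from $u$ to $v$. *)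

(* Defs.v *)
From mathcomp Require Import all_boot.
Set Implicit Arguments. Unset Strict Implicit. Unset Printing Implicit Defensive.

Lemma two_pow_gt0 n : 0 < 2 ^ n.
Proof. by rewrite expn_gt0. Qed.

(* Z_{2^n}, represented as 'I_(2^n) with arithmetic modulo 2^n. *)
Definition modo (n k : nat) : 'I_(2 ^ n) := Ordinal (ltn_pmod k (two_pow_gt0 n)).

Definition vtx (n : nat) : finType := ('I_(2 ^ n) * 'I_(2 ^ n))%type.

Definition origin (n : nat) : vtx n := (modo n 0, modo n 0).

(* Arcs of the directed arrowhead: u -> u + s, s in {(-1,-1),(1,0),(0,1)};
   -1 is represented as 2^n - 1 (mod 2^n). *)
Definition arc (n : nat) : rel (vtx n) := fun u v =>
  [|| v == (modo n (u.1 + (2 ^ n - 1)), modo n (u.2 + (2 ^ n - 1))),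
      v == (modo n (u.1 + 1), u.2)
    | v == (u.1, modo n (u.2 + 1))].

Definition reach (n : nat) (u v : vtx n) (k : nat) : bool :=
  [exists p : k.-tuple (vtx n), path (@arc n) u p && (last u p == v)].

(* Directed distance: least k with a walk of length k from u to v
   (searched among k < #|V|; equals #|V| if v is unreachable from u). *)
Definition ddist (n : nat) (u v : vtx n) : nat :=
  find (reach u v) (iota 0 #|vtx n|).

Definition odiam (n : nat) : nat := \max_(u : vtx n) \max_(v : vtx n) ddist u v.

(* Main.v *)
Require Import Defs.
From mathcomp Require Import all_boot zify.
Set Implicit Arguments. Unset Strict Implicit. Unset Printing Implicit Defensive.

Section S.
Variable n : nat.
Local Notation M := (2 ^ n).

Lemma reach0 (u v : vtx n) : reach u v 0 = (u == v).
Proof.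
apply/existsP/eqP => [[p /andP[_ /eqP <-]]|<-].
  by rewrite (tuple0 p).
by exists [tuple]; rewrite /=.
Qed.

Lemma reachS (u v : vtx n) k :
  reach u v k.+1 = [exists w, Defs.arc u w && reach w v k].
Proof.
apply/existsP/existsP => [[p]|[w /andP[uw /existsP[p /andP[pp lp]]]]].
  case/tupleP: p => w p /=; rewrite -andbA => /and3P[uw pp lp].
  by exists w; rewrite uw; apply/existsP; exists p; rewrite pp.
by exists [tuple of w :: p]; rewrite /= uw pp.
Qed.

Lemma M_gt0 : 0 < M. Proof. exact: two_pow_gt0. Qed.

Lemma cong_of_eq x y : x = y \/ x = y + M \/ y = x + M -> x = y %[mod M].
Proof. by case=> [->|[->|->]]; rewrite ?modnDr. Qed.

Lemma mod_small2 x : x < 2 * M -> x %% M = if x < M then x else x - M.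
Proof.
move=> hx; case: ifP => h; first by rewrite modn_small.
have {1}-> : x = (x - M) + M by lia.
by rewrite modnDr modn_small //; lia.
Qed.

Lemma eq_of_cong x y : x < 2 * M -> y < 2 * M -> x = y %[mod M] ->
  x = y \/ x = y + M \/ y = x + M.
Proof.
move=> hx hy; rewrite (mod_small2 hx) (mod_small2 hy).
by case: ifP; case: ifP; lia.
Qed.

Lemma cong_lin d x y x' y' i j : x = y %[mod d] ->
  x' + y + i * d = y' + x + j * d -> x' = y' %[mod d].
Proof.
move=> hxy e.
have : (x' + y + i * d) %% d = (y' + x + j * d) %% d by rewrite e.
rewrite ![_ + i * d]addnC ![_ + j * d]addnC !modnMDl -modnDmr -hxy modnDmr => /eqP.
by rewrite [y' + x]addnC [x' + x]addnC eqn_modDl => /eqP.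
Qed.

Lemma modoE k : (modo n k : nat) = k %% M. Proof. by []. Qed.

Lemma reach_cong (u v : vtx n) k : reach u v k <->
  exists a b c, a + b + c = k /\ v.1 + a = u.1 + b %[mod M] /\
                v.2 + a = u.2 + c %[mod M].
Proof.
case: v => v1 v2; elim: k u => [|k IH] [u1 u2] /=.
  rewrite reach0; split => [/eqP [-> ->]|[a [b [c [h [h1 h2]]]]]].
    by exists 0, 0, 0.
  move: h1 h2.
  have -> : a = 0 by lia. have -> : b = 0 by lia. have -> : c = 0 by lia.
  rewrite !addn0 !modn_small //.
  move=> e1 e2.
  by apply/eqP; congr pair; apply/val_inj.
have M0 := M_gt0.
rewrite reachS; split.
  case/existsP => w /andP[uw /IH [a [b [c [h [h1 h2]]]]]].
  move: uw => /or3P[] /eqP ew; move: h1 h2; rewrite ew /= ?modnDml => h1 h2.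
  - exists a.+1, b, c; split; first lia.
    by split; [apply: (cong_lin (i:=0) (j:=1) h1) | apply: (cong_lin (i:=0) (j:=1) h2)]; lia.
  - exists a, b.+1, c; split; first lia.
    by split; [apply: (cong_lin (i:=0) (j:=0) h1) | apply: (cong_lin (i:=0) (j:=0) h2)]; lia.
  - exists a, b, c.+1; split; first lia.
    by split; [apply: (cong_lin (i:=0) (j:=0) h1) | apply: (cong_lin (i:=0) (j:=0) h2)]; lia.
case=> a [b [c [h [h1 h2]]]].
case: a h h1 h2 => [|a] h h1 h2.
  case: b h h1 h2 => [|b] h h1 h2.
    case: c h h1 h2 => [|c] h h1 h2; first by [].
    apply/existsP; exists (u1, modo n (u2 + 1)).
    rewrite /Defs.arc eqxx !orbT /=; apply/IH; exists 0, 0, c.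
    split; first lia. rewrite /= modnDml.
    by split; [exact: h1 | apply: (cong_lin (i:=0) (j:=0) h2)]; lia.
  apply/existsP; exists (modo n (u1 + 1), u2).
  rewrite /Defs.arc eqxx !orbT /=; apply/IH; exists 0, b, c.
  split; first lia. rewrite /= modnDml.
  by split; [apply: (cong_lin (i:=0) (j:=0) h1) | exact: h2]; lia.
apply/existsP; exists (modo n (u1 + (M - 1)), modo n (u2 + (M - 1))).
rewrite /Defs.arc eqxx /=; apply/IH; exists a, b, c.
split; first lia. rewrite /= !modnDml.
by split; [apply: (cong_lin (i:=1) (j:=0) h1) | apply: (cong_lin (i:=1) (j:=0) h2)]; lia.
Qed.

Lemma card_vtx : #|vtx n| = M * M.
Proof. by rewrite card_prod card_ord. Qed.

Lemma ddist_le (u v : vtx n) k : reach u v k -> k < M * M -> ddist u v <= k.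
Proof.
move=> r lk; rewrite leqNgt; apply/negP => lt.
have := before_find 0 lt; rewrite nth_iota ?card_vtx // add0n r //.
Qed.

Lemma ddist_reach (u v : vtx n) k : reach u v k -> k < M * M ->
  reach u v (ddist u v).
Proof.
move=> r lk.
have hh : has (reach u v) (iota 0 #|vtx n|).
  by apply/hasP; exists k => //; rewrite mem_iota card_vtx.
have hf : find (reach u v) (iota 0 #|vtx n|) < #|vtx n|.
  by rewrite -{2}(size_iota 0 #|vtx n|) -has_find.
by have := nth_find 0 hh; rewrite nth_iota ?add0n.
Qed.

Lemma reach_of (u v : vtx n) a b c :
  (v.1 + a = u.1 + b \/ v.1 + a = u.1 + b + M \/ u.1 + b = v.1 + a + M) ->
  (v.2 + a = u.2 + c \/ v.2 + a = u.2 + c + M \/ u.2 + c = v.2 + a + M) ->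
  reach u v (a + b + c).
Proof.
move=> h1 h2; apply/reach_cong; exists a, b, c; split => //.
by split; apply: cong_of_eq; lia.
Qed.

Definition Q (x y : nat) :=
  M - 1 <= x + y /\ (0 < x -> x <= y -> M - 1 <= M + y - 2 * x) /\
  (0 < x -> y < x -> M - 1 <= 2 * M - 2 * x + y) /\
  (0 < y -> y <= x -> M - 1 <= M + x - 2 * y) /\
  (0 < y -> x < y -> M - 1 <= 2 * M - 2 * y + x).

Lemma M3 : exists t, (M = 3 * t + 1 /\ ~~ odd n) \/ (M = 3 * t + 2 /\ odd n).
Proof.
elim: n => [|m [t [[e o]|[e o]]]]; first by exists 0; left.
  by exists (2 * t); right; rewrite expnS e /= o; split => //; lia.
by exists (2 * t + 1); left; rewrite expnS e /= o; split => //; lia.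
Qed.

End S.

Lemma arith_xy M t x y : (M = 3 * t + 1 \/ M = 3 * t + 2) -> x < M -> y < M ->
  exists a b c, a < M /\ b < M /\ c < M /\ a + b + c <= M - 1 /\
    (x + a = b \/ x + a = b + M) /\ (y + a = c \/ y + a = c + M).
Proof.
move=> hM hx hy.
case: (leqP (x + y) (M - 1)) => h0.
  by exists 0, x, y; lia.
case: (posnP x) => x0; first by exists 0, x, y; lia.
case: (posnP y) => y0; first by exists 0, x, y; lia.
case: (leqP y x) => yx.
  case: (leqP (M + x - 2 * y) (M - 1)) => h1.
    by exists (M - y), (x - y), 0; lia.
  by exists (M - x), 0, (y + M - x); lia.
case: (leqP (M + y - 2 * x) (M - 1)) => h1.
  by exists (M - x), 0, (y - x); lia.
by exists (M - y), (x + M - y), 0; lia.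
Qed.

Section S2.
Variable n : nat.
Local Notation M := (2 ^ n).

Lemma Mlt : M - 1 < M * M.
Proof. have := M_gt0 n; have := leq_pmulr M (M_gt0 n); lia. Qed.

Lemma diff_exists u1 v1 : u1 < M -> v1 < M ->
  exists x, x < M /\ (v1 = u1 + x \/ v1 + M = u1 + x).
Proof.
move=> hu hv; case: (leqP u1 v1) => h.
  by exists (v1 - u1); lia.
by exists (v1 + M - u1); lia.
Qed.

Lemma reach_upper (u v : vtx n) : exists k, k <= M - 1 /\ reach u v k.
Proof.
have [t ht] := M3 n.
have [x [hx ex]] := diff_exists (ltn_ord u.1) (ltn_ord v.1).
have [y [hy ey]] := diff_exists (ltn_ord u.2) (ltn_ord v.2).
have hM : M = 3 * t + 1 \/ M = 3 * t + 2 by lia.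
have [a [b [c [ha [hb [hc [hs [h1 h2]]]]]]]] := arith_xy hM hx hy.
exists (a + b + c); split => //.
apply: reach_of. all: case: ex; case: ey; case: h1; case: h2; lia.
Qed.

Lemma ddist_upper (u v : vtx n) : ddist u v <= M - 1.
Proof.
have [k [hk r]] := reach_upper u v.
have hk2 : k < M * M by apply: leq_ltn_trans hk (Mlt).
exact: leq_trans (ddist_le r hk2) hk.
Qed.

Lemma reach_origin (v : vtx n) a b c :
  (v.1 + a = b \/ v.1 + a = b + M \/ b = v.1 + a + M) ->
  (v.2 + a = c \/ v.2 + a = c + M \/ c = v.2 + a + M) ->
  reach (origin n) v (a + b + c).
Proof. by move=> h1 h2; apply: reach_of; rewrite /= mod0n. Qed.

Lemma lower_origin (v : vtx n) k : Q n v.1 v.2 -> reach (origin n) v k ->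
  M - 1 <= k.
Proof.
move=> hQ /reach_cong [a [b [c [hk [h1 h2]]]]].
rewrite leqNgt; apply/negP => lk.
move: h1 h2; rewrite /= mod0n !add0n.
have hv1 := ltn_ord v.1; have hv2 := ltn_ord v.2.
have ha : a < M by lia.
have hb : b < M by lia.
have hc : c < M by lia.
move=> /(eq_of_cong (ltac:(lia) : v.1 + a < 2 * M) (ltac:(lia) : b < 2 * M)) e1.
move=> /(eq_of_cong (ltac:(lia) : v.2 + a < 2 * M) (ltac:(lia) : c < 2 * M)) e2.
case: hQ => [q1 [q2 [q3 [q4 q5]]]].
case: e1 => [f1|[f1|f1]]; last by clear -f1 hb; lia.
  case: e2 => [f2|[f2|f2]]; last by clear -f2 hc; lia.
    by clear -q1 f1 f2 hk lk; lia.
  have := q5 ltac:(clear -f2 hc ha; lia) ltac:(clear -f1 f2 hc hb; lia).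
  by clear -f1 f2 hk lk ha hb hc; lia.
case: e2 => [f2|[f2|f2]]; last by clear -f2 hc; lia.
  have := q3 ltac:(clear -f1 hb ha; lia) ltac:(clear -f1 f2 hc hb; lia).
  by clear -f1 f2 hk lk ha hb hc; lia.
case: (leqP v.1 v.2) => hxy.
  have := q2 ltac:(clear -f1 hb ha; lia) hxy.
  by clear -f1 f2 hk lk ha hb hc hxy; lia.
have := q4 ltac:(clear -f2 hc ha; lia) ltac:(clear -hxy; lia).
by clear -f1 f2 hk lk ha hb hc hxy; lia.
Qed.

Lemma lenQ (v : vtx n) a b c : ddist (origin n) v = M - 1 ->
  (v.1 + a = b \/ v.1 + a = b + M \/ b = v.1 + a + M) ->
  (v.2 + a = c \/ v.2 + a = c + M \/ c = v.2 + a + M) ->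
  M - 1 <= a + b + c.
Proof.
move=> E h1 h2; case: (leqP (M * M) (a + b + c)) => h.
  by have := Mlt; lia.
by rewrite -E; apply: ddist_le (reach_origin h1 h2) h.
Qed.

Lemma charQ (v : vtx n) : ddist (origin n) v = M - 1 <-> Q n v.1 v.2.
Proof.
have hv1 := ltn_ord v.1; have hv2 := ltn_ord v.2.
split => [E|hQ].
  split; first by have := lenQ (a:=0) (b:=v.1) (c:=v.2) E; lia.
  split; first by move=> h1 h2; have := lenQ (a:=M - v.1) (b:=0) (c:=v.2 - v.1) E; lia.
  split; first by move=> h1 h2; have := lenQ (a:=M - v.1) (b:=0) (c:=v.2 + M - v.1) E; lia.
  split; first by move=> h1 h2; have := lenQ (a:=M - v.2) (b:=v.1 - v.2) (c:=0) E; lia.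
  by move=> h1 h2; have := lenQ (a:=M - v.2) (b:=v.1 + M - v.2) (c:=0) E; lia.
apply/eqP; rewrite eqn_leq ddist_upper /=.
have [k [hk r]] := reach_upper (origin n) v.
have hk2 : k < M * M by apply: leq_ltn_trans hk (Mlt).
exact: lower_origin hQ (ddist_reach r hk2).
Qed.

Lemma count_set (s : seq (nat * nat)) :
  (forall p, p \in s -> p.1 < M /\ p.2 < M) ->
  (forall x y, x < M -> y < M -> Q n x y <-> (x, y) \in s) -> uniq s ->
  #|[set v : vtx n | ddist (origin n) v == M - 1]| = size s.
Proof.
move=> hs hQ us.
pose f (p : nat * nat) : vtx n := (modo n p.1, modo n p.2).
have -> : [set v : vtx n | ddist (origin n) v == M - 1] = [set v in map f s].
  apply/setP => v; rewrite !inE.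
  case: v => v1 v2.
  have hv1 := ltn_ord v1; have hv2 := ltn_ord v2.
  apply/eqP/idP => [/charQ /= /(hQ _ _ hv1 hv2) hin|/mapP [p hp ev]].
    have -> : (v1, v2) = f (v1 : nat, v2 : nat).
      by congr pair; apply/val_inj; rewrite /= modn_small.
    exact: map_f.
  apply/charQ => /=; have [p1 p2] := hs p hp.
  have e1 : (v1 : nat) = p.1 by move: ev => [-> _]; rewrite /= modn_small.
  have e2 : (v2 : nat) = p.2 by move: ev => [_ ->]; rewrite /= modn_small.
  by apply/(hQ _ _ hv1 hv2); rewrite e1 e2 -surjective_pairing.
rewrite cardsE -(size_map f); apply/card_uniqP; rewrite map_inj_in_uniq //.
move=> [a1 a2] [b1 b2] /hs [ha1 ha2] /hs [hb1 hb2] [e1 e2].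
by move: e1 e2; rewrite /= !modn_small // => -> ->.
Qed.

Lemma Qsolve x y (s : seq (nat * nat)) : x < M -> y < M -> Q n x y ->
  (forall x y, x < M -> y < M -> M - 1 <= x + y ->
     (0 < x -> x <= y -> M - 1 <= M + y - 2 * x) ->
     (0 < x -> y < x -> M - 1 <= 2 * M - 2 * x + y) ->
     (0 < y -> y <= x -> M - 1 <= M + x - 2 * y) ->
     (0 < y -> x < y -> M - 1 <= 2 * M - 2 * y + x) -> (x, y) \in s) ->
  (x, y) \in s.
Proof. by move=> hx hy [q1 [q2 [q3 [q4 q5]]]] H; apply: H. Qed.
End S2.

Ltac spec_all :=
  repeat match goal with
  | H : is_true ?a -> _, H0 : is_true ?a |- _ => specialize (H H0)
  end;
  repeat match goal with H : _ -> _ |- _ => clear H end.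

Ltac solveQ :=
  move=> xx yy hx1 hy1 q1 q2 q3 q4 q5; rewrite !inE !xpair_eqE;
  (have [pxy|pxy|pxy] := ltngtP xx yy;
  [have pxy' := ltnW pxy | have pxy' := ltnW pxy | have pxy' := eq_leq pxy; have pyx' := eq_leq (esym pxy)]);
  have [px|px] := posnP xx; have [py|py] := posnP yy;
  spec_all; lia.

Ltac memQ :=
  move=> hx hy;
  rewrite !inE;
  repeat (case/orP; first by move/eqP => [-> ->]; rewrite /Q; lia);
  by move/eqP => [-> ->]; rewrite /Q; lia.

Theorem proposition4 (n : nat) :
  (forall u v : vtx n, exists k, reach u v k) /\
  odiam n = 2 ^ n - 1 /\
  (n = 1 -> #|[set v : vtx n | ddist (origin n) v == odiam n]| = 3) /\
  (1 < n -> #|[set v : vtx n | ddist (origin n) v == odiam n]| = 6).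
Proof.
have Hd : odiam n = 2 ^ n - 1.
  apply/eqP; rewrite eqn_leq; apply/andP; split.
    apply/bigmax_leqP => u _; apply/bigmax_leqP => v _; exact: ddist_upper.
  case: (posnP n) => [->|n0]; first by rewrite expn0 subnn.
  have [t ht] := M3 n.
  have M2 : 2 <= 2 ^ n.
    by case: n n0 {ht} => [|m] // _; rewrite expnS; have := M_gt0 m; lia.
  pose v : vtx n := (modo n (2 * t + 1), modo n t).
  have E : ddist (origin n) v = 2 ^ n - 1.
    apply/charQ; rewrite /= !modn_small; [rewrite /Q| lia | lia]; lia.
  apply: leq_trans (leq_bigmax (F := fun u => \max_(v : vtx n) ddist u v) (origin n)).
  by apply: leq_trans (leq_bigmax (F := fun w => ddist (origin n) w) v); rewrite E.
split; first by move=> u v; have [k [_ r]] := reach_upper u v; exists k.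
split => //; rewrite Hd; split.
  move=> n1; clear Hd; subst n.
  apply: (count_set (s := [:: (1, 0); (0, 1); (1, 1)])) => //.
    by move=> [a b] /=; rewrite !inE !xpair_eqE expn1 => h; lia.
  move=> x y hx hy; split.
    by move=> hQ; apply: (Qsolve hx hy hQ); rewrite expn1; solveQ.
  by move: hx hy; rewrite expn1; memQ.
move=> n1.
have M4 : 4 <= 2 ^ n.
  by case: n n1 {Hd} => [|[|m]] // _; rewrite !expnS; have := M_gt0 m; lia.
have [t [[ht _]|[ht _]]] := M3 n.
  apply: (count_set (s := [:: (2*t+1, t); (2*t+1, t+1); (2*t, t);
                              (t, 2*t+1); (t+1, 2*t+1); (t, 2*t)])).
  - by move=> [a b] /=; rewrite !inE !xpair_eqE => h; lia.
  - move=> x y hx hy; split.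
      by move=> hQ; apply: (Qsolve hx hy hQ); solveQ.
    by move: hx hy; memQ.
  - by rewrite /= !inE !xpair_eqE; lia.
apply: (count_set (s := [:: (2*t+2, t+1); (2*t+1, t); (2*t+1, t+1);
                            (t+1, 2*t+2); (t, 2*t+1); (t+1, 2*t+1)])).
- by move=> [a b] /=; rewrite !inE !xpair_eqE => h; lia.
- move=> x y hx hy; split.
    by move=> hQ; apply: (Qsolve hx hy hQ); solveQ.
  by move: hx hy; memQ.
- by rewrite /= !inE !xpair_eqE; lia.
Qed.
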